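(* For every graph $G$ and every edge $e\in E(G)$, $$\mathrm{adim}(G)-1\le\mathrm{adim}(G-e)\le\mathrm{adim}(G)+1.$$
   Context: In a graph $H$, let $d_{H,1}(a,b)$ be $0$ if $a=b$, $1$ if $ab\in E(H)$, and $2$ otherwise. A set $A\subseteq V(H)$ is an adjacency resolving set of $H$ if for all distinct $a,b\in V(H)$ there is $z\in A$ with $d_{H,1}(a,z)\ne d_{H,1}(b,z)$. $\mathrm{adim}(H)$ is the minimum size of an adjacency resolving set of $H$. $G-e$ denotes $G$ with the edge $e$ deleted. *)

(* Defs.v *)
From mathcomp Require Import all_boot.
Set Implicit Arguments. Unset Strict Implicit. Unset Printing Implicit Defensive.

Definition simple_graph (T : finType) (g : rel T) : Prop :=
  symmetric g /\ irreflexive g.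

Definition dist1 (T : finType) (g : rel T) (a b : T) : nat :=
  if a == b then 0 else if g a b then 1 else 2.

Definition adj_resolving (T : finType) (g : rel T) (A : {set T}) : bool :=
  [forall a : T, forall b : T,
     (a != b) ==> [exists z in A, dist1 g a z != dist1 g b z]].

(* adim(g): minimum size of an adjacency resolving set
   (the full vertex set is always resolving, so #|T| is a valid default). *)
Definition adim (T : finType) (g : rel T) : nat :=
  \big[minn/#|T|]_(A : {set T} | adj_resolving g A) #|A|.

Definition del_edge (T : finType) (g : rel T) (u v : T) : rel T :=
  fun x y => g x y && ~~ (((x == u) && (y == v)) || ((x == v) && (y == u))).

(* Main.v *)
Require Import Defs.
From mathcomp Require Import all_boot zify.
Set Implicit Arguments. Unset Strict Implicit.

Lemma adim_le (T : finType) (g : rel T) (B : {set T}) :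
  adj_resolving g B -> adim g <= #|B|.
Proof.
move=> HB; rewrite /adim.
have : B \in index_enum {set T} by rewrite mem_index_enum.
elim: (index_enum _) => [//|x r IH]; rewrite inE big_cons => /orP [/eqP <-|Hr].
  by rewrite HB geq_minl.
case: ifP => _; last exact: IH.
by rewrite geq_min IH ?orbT.
Qed.

Lemma setT_res (T : finType) (g : rel T) : adj_resolving g setT.
Proof.
apply/forallP=> a; apply/forallP=> b; apply/implyP=> ab.
apply/existsP; exists a; rewrite in_setT /= /dist1 eqxx.
have ba : (b == a) = false by rewrite eq_sym; exact: negbTE.
by rewrite ba; case: (g b a).
Qed.

Lemma adim_attained (T : finType) (g : rel T) :
  exists2 A, adj_resolving g A & #|A| = adim g.
Proof.
rewrite /adim.
apply: (big_ind (fun x => exists2 A, adj_resolving g A & #|A| = x)).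
- by exists setT; [apply: setT_res | rewrite cardsT].
- move=> x y [A HA <-] [B HB <-].
  by case: (leqP #|A| #|B|) => h; [exists A => //; apply/esym/minn_idPl | exists B => //; apply/esym/minn_idPr; exact: ltnW].
- by move=> A HA; exists A.
Qed.

Lemma res_transfer (T : finType) (g1 g2 : rel T) (u v : T) (A : {set T}) :
  (forall x y, x \notin [set u; v] -> dist1 g2 x y = dist1 g1 x y) ->
  (forall x y, y \notin [set u; v] -> dist1 g2 x y = dist1 g1 x y) ->
  adj_resolving g1 A ->
  adj_resolving g2 (if (u \in A) || (v \in A) then A :|: [set u; v] else A).
Proof.
move=> E1 E2 HA.
apply/forallP=> a; apply/forallP=> b; apply/implyP=> ab.
have := forallP (forallP HA a) b; rewrite ab /= => /existsP [z /andP [zA hz]].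
case: (boolP (z \in [set u; v])) => zuv; last first.
  apply/existsP; exists z; rewrite !E2 // hz andbT.
  by case: ifP => _; rewrite ?inE zA.
have Huv : (u \in A) || (v \in A).
  by move: zuv; rewrite !inE => /orP [] /eqP <-; rewrite zA ?orbT.
rewrite Huv.
have d0 : forall x y, dist1 g2 x x != dist1 g2 y x -> True by [].
case: (boolP (a \in [set u; v])) => au.
  apply/existsP; exists a; rewrite inE au orbT /= /dist1 eqxx.
  have ba : (b == a) = false by rewrite eq_sym; exact: negbTE.
  by rewrite ba; case: (g2 b a).
case: (boolP (b \in [set u; v])) => bu.
  apply/existsP; exists b; rewrite inE bu orbT /= /dist1 eqxx (negbTE ab).
  by case: (g2 a b).
apply/existsP; exists z; rewrite inE zA /= !E1 //.
Qed.

Lemma adim_step (T : finType) (g1 g2 : rel T) (u v : T) :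
  (forall x y, x \notin [set u; v] -> dist1 g2 x y = dist1 g1 x y) ->
  (forall x y, y \notin [set u; v] -> dist1 g2 x y = dist1 g1 x y) ->
  adim g2 <= adim g1 + 1.
Proof.
move=> E1 E2; have [A HA <-] := (@adim_attained T g1).
apply: (leq_trans (adim_le (res_transfer E1 E2 HA))).
case: ifP => [/orP H|_]; last by rewrite addn1.
have h2 : #|[set u; v]| <= 2 by rewrite cards2; case: (u != v).
have h1 : 0 < #|A :&: [set u; v]|.
  rewrite card_gt0; apply/set0Pn.
  by case: H => h; [exists u | exists v]; rewrite !inE h eqxx ?orbT.
rewrite cardsU; lia.
Qed.

Theorem theorem6p6 (T : finType) (g : rel T) (u v : T) :
  simple_graph g -> g u v ->
  adim g - 1 <= adim (del_edge g u v) /\ adim (del_edge g u v) <= adim g + 1.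
Proof.
move=> [sym irr] guv.
have E1 : forall x y, x \notin [set u; v] -> dist1 (del_edge g u v) x y = dist1 g x y.
  move=> x y; rewrite !inE negb_or => /andP [/negbTE xu /negbTE xv].
  by rewrite /dist1 /del_edge xu xv /= andbT.
have E2 : forall x y, y \notin [set u; v] -> dist1 (del_edge g u v) x y = dist1 g x y.
  move=> x y; rewrite !inE negb_or => /andP [/negbTE yu /negbTE yv].
  by rewrite /dist1 /del_edge yu yv /= !andbF andbT.
split; last exact: adim_step E1 E2.
rewrite leq_subLR addnC.
apply: (adim_step (u:=u) (v:=v)) => x y H; [exact/esym/E1|exact/esym/E2].
Qed.
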